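(* For all integers $k\ge1$ and generic $a,b,c,d$, the polynomials $$Q_k^{(2)}(n;a;b,c,d)=\sum_{j=0}^k\frac{(-n)_j(n+a)_j(-k)_j(k-1-a+b+c+d)_j}{j!(b)_j(c)_j(d)_j}$$ satisfy $$abcd\,\frac{n+\frac a2}{\frac a2}\,Q_k^{(2)}(n;a;b,c,d)=(n+a)(n+b)(n+c)(n+d)\,Q_{k-1}^{(2)}(n;a+1;b+1,c+1,d+1)$$ $$\qquad-n(n+a-b)(n+a-c)(n+a-d)\,Q_{k-1}^{(2)}(n-1;a+1;b+1,c+1,d+1).$$
   Context: $(c)_n$ denotes the Pochhammer symbol, $(c)_0=1$. *)

(* Defs.v *)
From HB Require Import structures.
From mathcomp Require Import all_boot all_order all_algebra.
Set Implicit Arguments. Unset Strict Implicit. Unset Printing Implicit Defensive.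
Import Order.TTheory GRing.Theory Num.Theory.
Local Open Scope ring_scope.

Definition poch (R : ringType) (c : R) (m : nat) : R :=
  \prod_(i < m) (c + i%:R).

Definition Q2 (R : fieldType) (k : nat) (n a b c d : R) : R :=
  \sum_(j < k.+1)
    (poch (- n) j * poch (n + a) j * poch (- k%:R) j
       * poch (k%:R - 1 - a + b + c + d) j)
    / ((j`!)%:R * poch b j * poch c j * poch d j).

(* Main.v *)
Require Import Defs.
From HB Require Import structures.
From mathcomp Require Import all_boot all_order all_algebra.
From mathcomp Require Import ring.
Import Order.TTheory GRing.Theory Num.Theory.
Local Open Scope ring_scope.

Lemma pochS_l {R : fieldType} (x : R) j : poch x j.+1 = x * poch (x + 1) j.
Proof.
rewrite /poch big_ord_recl /= addr0; congr (_ * _).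
by apply: eq_bigr => i _; rewrite /bump leq0n add1n -addn1 natrD addrA addrAC.
Qed.

Lemma pochS_r {R : fieldType} (x : R) j : poch x j.+1 = poch x j * (x + j%:R).
Proof. by rewrite /poch big_ord_recr. Qed.

Lemma poch0 (R : fieldType) (x : R) : poch x 0 = 1.
Proof. by rewrite /poch big_ord0. Qed.

Lemma poch_neq0 (R : fieldType) (x : R) m :
  (forall i, (i < m)%N -> x + i%:R != 0) -> poch x m != 0.
Proof. by move=> H; apply/prodf_neq0 => i _; apply: H. Qed.

Definition vj {R : fieldType} (a b c d : R) (j : nat) := a - (b + c + d) - j%:R.
Definition uj {R : fieldType} (a b c d : R) (j : nat) :=
  (b * c * d * (a + j%:R) + (a - b) * (a - c) * (a - d) * j%:R) / a
  - vj a b c d j * j%:R * (a + j%:R).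

Lemma L1 (R : fieldType) (n a b c d : R) j : a != 0 ->
  (n + a) * (n + b) * (n + c) * (n + d) * (poch (- n) j * poch (n + (a + 1)) j)
  - n * (n + a - b) * (n + a - c) * (n + a - d)
      * (poch (- (n - 1)) j * poch (n - 1 + (a + 1)) j)
  = (2%:R * n + a) * (uj a b c d j * (poch (- n) j * poch (n + a) j)
       + vj a b c d j * (poch (- n) j.+1 * poch (n + a) j.+1)).
Proof.
move=> ha; rewrite /uj /vj; case: j => [|j].
  rewrite !poch0 /poch !big_ord1 /=; field; exact: ha.
have e2 : poch (- n) j.+2 = - n * (poch (- n + 1) j * (- n + 1 + j%:R)).
  by rewrite pochS_l pochS_r.
have e1 : poch (- n) j.+1 = - n * poch (- n + 1) j by rewrite pochS_l.
have e3 : poch (n + (a + 1)) j.+1 = poch (n + (a + 1)) j * (n + (a + 1) + j%:R).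
  by rewrite pochS_r.
have e4 : poch (- (n - 1)) j.+1 = poch (- n + 1) j * (- n + 1 + j%:R).
  by rewrite pochS_r; have -> : - (n - 1) = - n + 1 by ring.
have e5 : poch (n - 1 + (a + 1)) j.+1 = (n + a) * poch (n + (a + 1)) j.
  rewrite pochS_l; have -> : n - 1 + (a + 1) + 1 = n + (a + 1) by ring.
  by congr (_ * _); ring.
have e7 : poch (n + a) j.+2 = (n + a) * (poch (n + (a + 1)) j * (n + (a + 1) + j%:R)).
  by rewrite pochS_l pochS_r addrA.
have e6 : poch (n + a) j.+1 = (n + a) * poch (n + (a + 1)) j by rewrite pochS_l addrA.
rewrite e2 e7 e1 e3 e4 e5 e6.
rewrite -addn1 natrD.
set P := poch (- n + 1) j; set Q := poch (n + (a + 1)) j.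
field; exact: ha.
Qed.

Definition tt {R : fieldType} (k : nat) (a b c d : R) (j : nat) :=
  poch (- k%:R) j * poch (k%:R - 1 - a + b + c + d) j
  / ((j`!)%:R * poch b j * poch c j * poch d j).

Lemma Q2E (R : fieldType) k (n a b c d : R) :
  Q2 k n a b c d = \sum_(j < k.+1) (poch (- n) j * poch (n + a) j) * tt k a b c d j.
Proof. by apply: eq_bigr => j _; rewrite /tt -!mulrA. Qed.

Lemma ttS (R : fieldType) k' (a b c d : R) j :
  tt k'.+1 a b c d j.+1 =
  - (k'.+1)%:R * (k'.+1%:R - 1 - a + b + c + d) / ((j.+1)%:R * b * c * d)
  * tt k' (a + 1) (b + 1) (c + 1) (d + 1) j.
Proof.
rewrite /tt (pochS_l (- _)) (pochS_l (_ - 1 - a + b + c + d)) (pochS_l b)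
  (pochS_l c) (pochS_l d) factS natrM.
have -> : - (k'.+1)%:R + 1 = - k'%:R :> R by rewrite mulrS; ring.
have -> : k'.+1%:R - 1 - a + b + c + d + 1
   = k'%:R - 1 - (a + 1) + (b + 1) + (c + 1) + (d + 1) :> R by rewrite mulrS; ring.
rewrite !invfM; ring.
Qed.

Lemma ttSr (R : fieldType) k (a b c d : R) j :
  tt k a b c d j.+1 = tt k a b c d j *
  ((- k%:R + j%:R) * (k%:R - 1 - a + b + c + d + j%:R)
   / ((j.+1)%:R * (b + j%:R) * (c + j%:R) * (d + j%:R))).
Proof.
rewrite /tt !pochS_r factS natrM.
rewrite !invfM; ring.
Qed.

Lemma L2a (R : fieldType) (hchar : [pchar R] =i pred0) k' j (hj : (j < k')%N)
  (a b c d : R) (ha : a != 0)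
  (hb : forall i : nat, (i < k'.+1)%N -> b + i%:R != 0)
  (hc : forall i : nat, (i < k'.+1)%N -> c + i%:R != 0)
  (hd : forall i : nat, (i < k'.+1)%N -> d + i%:R != 0) :
  b * c * d * tt k'.+1 a b c d j.+1
  = tt k' (a + 1) (b + 1) (c + 1) (d + 1) j.+1 * uj a b c d j.+1
    + tt k' (a + 1) (b + 1) (c + 1) (d + 1) j * vj a b c d j.
Proof.
rewrite ttS ttSr; set T := tt k' _ _ _ _ j.
have hn := (pcharf0P R).1 hchar.
have nz : forall (x : R) i, (forall i, (i < k'.+1)%N -> x + i%:R != 0) ->
   (i < k')%N -> x + 1 + i%:R != 0.
  move=> x i hx hi; rewrite -addrA -mulrS; apply: hx; by [].
have hj1 : (j.+1)%:R != 0 :> R by rewrite hn.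
have hb0 : b != 0 by have := hb 0%N isT; rewrite addr0.
have hc0 : c != 0 by have := hc 0%N isT; rewrite addr0.
have hd0 : d != 0 by have := hd 0%N isT; rewrite addr0.
have hbj := nz b j hb hj; have hcj := nz c j hc hj; have hdj := nz d j hd hj.
rewrite /uj /vj.
field.
by rewrite ha hdj hcj hbj hd0 hc0 hb0 -mulrS hj1.
Qed.

Lemma L2b (R : fieldType) (hchar : [pchar R] =i pred0) k'
  (a b c d : R)
  (hb : forall i : nat, (i < k'.+1)%N -> b + i%:R != 0)
  (hc : forall i : nat, (i < k'.+1)%N -> c + i%:R != 0)
  (hd : forall i : nat, (i < k'.+1)%N -> d + i%:R != 0) :
  b * c * d * tt k'.+1 a b c d k'.+1
  = tt k' (a + 1) (b + 1) (c + 1) (d + 1) k' * vj a b c d k'.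
Proof.
rewrite ttS; set T := tt k' _ _ _ _ k'.
have hn := (pcharf0P R).1 hchar.
have hj1 : (k'.+1)%:R != 0 :> R by rewrite hn.
have hb0 : b != 0 by have := hb 0%N isT; rewrite addr0.
have hc0 : c != 0 by have := hc 0%N isT; rewrite addr0.
have hd0 : d != 0 by have := hd 0%N isT; rewrite addr0.
rewrite /vj.
field.
by rewrite hd0 hc0 hb0 -mulrS hj1.
Qed.

Lemma lin {R : fieldType} {x y A B T X : R} :
  A * x - B * y = X -> A * (x * T) - B * (y * T) = T * X.
Proof. by move<-; ring. Qed.

Theorem mainTheorem16 (R : fieldType) (hchar : [pchar R] =i pred0)
  (k : nat) (hk : (1 <= k)%N) (n a b c d : R)
  (ha : a != 0)
  (hb : forall j : nat, (j < k)%N -> b + j%:R != 0)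
  (hc : forall j : nat, (j < k)%N -> c + j%:R != 0)
  (hd : forall j : nat, (j < k)%N -> d + j%:R != 0) :
  a * b * c * d * ((n + a / 2) / (a / 2)) * Q2 k n a b c d
  = (n + a) * (n + b) * (n + c) * (n + d)
      * Q2 k.-1 n (a + 1) (b + 1) (c + 1) (d + 1)
    - n * (n + a - b) * (n + a - c) * (n + a - d)
      * Q2 k.-1 (n - 1) (a + 1) (b + 1) (c + 1) (d + 1).
Proof.
case: k hk hb hc hd => [//|k'] _ hb hc hd /=.
rewrite !Q2E !mulr_sumr -sumrB.
under [in RHS]eq_bigr => j _ do rewrite (lin (L1 _ n a b c d j ha)).
have hn := (pcharf0P R).1 hchar.
have h2 : (2%:R : R) != 0 by rewrite hn.
have -> : a * b * c * d * ((n + a / 2) / (a / 2)) = (2%:R * n + a) * (b * c * d).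
  by field; rewrite ha h2.
set T := fun j => tt k' (a + 1) (b + 1) (c + 1) (d + 1) j.
set phi := fun j => poch (- n) j * poch (n + a) j.
have S : \sum_(j < k'.+2) phi j * (b * c * d * tt k'.+1 a b c d j)
   = \sum_(j < k'.+1) (T j * uj a b c d j * phi j + T j * vj a b c d j * phi j.+1).
  rewrite big_split /=.
  rewrite big_ord_recl big_ord_recr /=.
  rewrite [X in _ = X + _]big_ord_recl [X in _ = _ + X]big_ord_recr /=.
  have e1 : \sum_(i < k') phi (bump 0 i) * (b * c * d * tt k'.+1 a b c d (bump 0 i))
    = \sum_(i < k') T (bump 0 i) * uj a b c d (bump 0 i) * phi (bump 0 i)
      + \sum_(i < k') T i * vj a b c d i * phi i.+1.
    rewrite -big_split; apply: eq_bigr => i _ /=.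
    change (bump 0 i) with i.+1.
    rewrite (@L2a _ hchar _ _ (ltn_ord i) _ _ _ _ ha hb hc hd) /T /phi; ring.
  have e2 : phi (bump 0 k') * (b * c * d * tt k'.+1 a b c d (bump 0 k'))
     = T k' * vj a b c d k' * phi k'.+1.
    change (bump 0 k') with k'.+1.
    rewrite (@L2b _ hchar _ a _ _ _ hb hc hd) /T /phi; ring.
  have e0 : phi 0%N * (b * c * d * tt k'.+1 a b c d 0) = T 0%N * uj a b c d 0 * phi 0%N.
    rewrite /T /phi /tt /uj /vj !poch0 /=.
    have hb0 : b != 0 by have := hb 0%N isT; rewrite addr0.
    have hc0 : c != 0 by have := hc 0%N isT; rewrite addr0.
    have hd0 : d != 0 by have := hd 0%N isT; rewrite addr0.
    by field; rewrite ha hn.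
  rewrite e0 e1 e2; ring.
rewrite (_ : \sum_(j < k'.+1) _ = (2%:R * n + a) *
   \sum_(j < k'.+1) (T j * uj a b c d j * phi j + T j * vj a b c d j * phi j.+1)).
  by rewrite -S -mulrA !mulr_sumr; apply: eq_bigr => j _; rewrite /phi; ring.
by rewrite mulr_sumr; apply: eq_bigr => j _; rewrite /T /phi; ring.
Qed.
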